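(* For integers $m\ge2$, $k\ge1$ let $V_J(m,k)=\left(1-\frac1m\right)\frac{k}{\ln m}$ and $V_H(m,k)=\frac{k(m^{1/k}-1)}{\ln m}$. Then $\min_{m\in\mathbb{Z}_{\ge2},\,k\in\mathbb{Z}_{\ge1}}\max\{V_J(m,k),V_H(m,k)\}=\frac{2(\sqrt3-1)}{\ln 3}$, attained at $m=3$, $k=2$. *)

(* Defs.v *)
From Stdlib Require Import Reals.
Open Scope R_scope.

Definition V_J (m k : nat) : R := (1 - / INR m) * INR k / ln (INR m).

Definition V_H (m k : nat) : R := INR k * (Rpower (INR m) (/ INR k) - 1) / ln (INR m).

Definition V_max (m k : nat) : R := Rmax (V_J m k) (V_H m k).

(* Main.v *)
Require Import Defs.
From Stdlib Require Import Reals Lra Lia Psatz.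
From Coquelicot Require Import Coquelicot.
Open Scope R_scope.

Lemma mono0 (f f' : R -> R) :
  (forall c, derivable_pt_lim f c (f' c)) -> (forall c, 0 <= c -> 0 <= f' c) ->
  forall x, 0 <= x -> f 0 <= f x.
Proof.
  intros Hd Hp x Hx. destruct (Req_dec x 0) as [->|Hn]; [lra|].
  destruct (MVT_cor2 f f' 0 x) as [c [Hc1 Hc2]]; [lra| intros; apply Hd |].
  assert (0 <= f' c) by (apply Hp; lra). nra.
Qed.

Lemma T1a x : 0 <= x -> 1 + x + x^2/2 <= exp x.
Proof.
  intros Hx.
  pose (g := fun x => exp x - (1 + x + x^2/2)).
  assert (H := mono0 g (fun x => exp x - (1 + x)) ltac:(intro c; apply is_derive_Reals; unfold g; auto_derive; [auto|field])
    ltac:(intros c _; pose proof (exp_ineq1_le c); lra) x Hx).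
  unfold g in H. rewrite exp_0 in H. lra.
Qed.

Lemma T1 x : 0 <= x -> 1 + x + x^2/2 + x^3/6 <= exp x.
Proof.
  intros Hx.
  pose (g := fun x => exp x - (1 + x + x^2/2 + x^3/6)).
  assert (H := mono0 g (fun x => exp x - (1 + x + x^2/2)) ltac:(intro c; apply is_derive_Reals; unfold g; auto_derive; [auto|field])
    ltac:(intros c Hc; pose proof (T1a c Hc); lra) x Hx).
  unfold g in H. rewrite exp_0 in H. lra.
Qed.

Lemma T2a x : 0 <= x -> exp (-x) <= 1 - x + x^2/2.
Proof.
  intros Hx.
  pose (g := fun x => 1 - x + x^2/2 - exp (-x)).
  assert (H := mono0 g (fun x => -1 + x + exp (-x)) ltac:(intro c; apply is_derive_Reals; unfold g; auto_derive; [auto|field])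
    ltac:(intros c _; pose proof (exp_ineq1_le (-c)); lra) x Hx).
  unfold g in H. rewrite Ropp_0, exp_0 in H. lra.
Qed.

Lemma T2 x : 0 <= x -> 1 - x + x^2/2 - x^3/6 <= exp (-x).
Proof.
  intros Hx.
  pose (g := fun x => exp (-x) - (1 - x + x^2/2 - x^3/6)).
  assert (H := mono0 g (fun x => 1 - x + x^2/2 - exp (-x)) ltac:(intro c; apply is_derive_Reals; unfold g; auto_derive; [auto|field])
    ltac:(intros c Hc; pose proof (T2a c Hc); lra) x Hx).
  unfold g in H. rewrite Ropp_0, exp_0 in H. lra.
Qed.

Lemma divle a b z : 0 < z -> a * z <= b -> a <= b / z.
Proof. intros; apply Rle_div_r; auto. Qed.
Lemma ledivr a b z : 0 < z -> a <= b * z -> a / z <= b.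
Proof. intros; apply Rle_div_l; auto. Qed.

Lemma lnlb a y : 0 < y -> / y <= exp (-a) -> a <= ln y.
Proof.
  intros Hy H. rewrite <- (ln_exp a). apply ln_le; [apply exp_pos|].
  rewrite exp_Ropp in H. pose proof (exp_pos a).
  apply Rinv_le_contravar in H; [|apply Rinv_0_lt_compat; exact Hy].
  rewrite !Rinv_inv in H. exact H.
Qed.

Lemma lnub b y : 0 < y -> y <= exp b -> ln y <= b.
Proof. intros Hy H. rewrite <- (ln_exp b). apply ln_le; auto. Qed.

Lemma emb6 : 0.544 <= exp (Ropp 0.6).
Proof. pose proof (T2 0.6 ltac:(lra)). simpl in *. lra. Qed.

Lemma ln2_lb : 0.6 <= ln 2.
Proof. apply lnlb; [lra|]. pose proof emb6. lra. Qed.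

Lemma ln4_lb : 1.2 <= ln 4.
Proof. apply lnlb; [lra|]. replace (Ropp 1.2) with (Ropp 0.6 + Ropp 0.6) by lra.
  rewrite exp_plus. pose proof emb6. nra. Qed.

Lemma ln5_lb : 1.2 <= ln 5.
Proof. apply lnlb; [lra|]. replace (Ropp 1.2) with (Ropp 0.6 + Ropp 0.6) by lra.
  rewrite exp_plus. pose proof emb6. nra. Qed.

Lemma ln3_lb : 1.08 <= ln 3.
Proof. apply lnlb; [lra|]. replace (Ropp 1.08) with (Ropp 0.54 + Ropp 0.54) by lra.
  rewrite exp_plus. pose proof (T2 0.54 ltac:(lra)). simpl in *. nra. Qed.

Lemma ln2_ub : ln 2 <= 0.735.
Proof. apply lnub; [lra|]. pose proof (T1 0.735 ltac:(lra)). simpl in *. lra. Qed.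
Lemma ln3_ub : ln 3 <= 1.47.
Proof. apply lnub; [lra|]. pose proof (T1 1.47 ltac:(lra)). simpl in *. lra. Qed.
Lemma ln4_ub : ln 4 <= 1.65.
Proof. apply lnub; [lra|]. pose proof (T1 1.65 ltac:(lra)). simpl in *. lra. Qed.
Lemma ln5_ub : ln 5 <= 1.76.
Proof. apply lnub; [lra|]. pose proof (T1 1.76 ltac:(lra)). simpl in *. lra. Qed.

Lemma sqrt3_facts : 5/3 <= sqrt 3 <= 1.7321.
Proof.
  pose proof (sqrt_pos 3). pose proof (sqrt_sqrt 3 ltac:(lra)). split; nra.
Qed.

Lemma c_le : 2 * (sqrt 3 - 1) / ln 3 <= 1.36.
Proof.
  pose proof sqrt3_facts. pose proof ln3_lb.
  apply ledivr; lra.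
Qed.

Lemma VH_ge m k : 1 < INR m -> 0 < INR k -> 0.6 * INR k <= ln (INR m) -> 1.36 <= V_H m k.
Proof.
  intros Hm Hk Hx. unfold V_H, Rpower.
  assert (HL : 0 < ln (INR m)) by (rewrite <- ln_1; apply ln_increasing; lra).
  set (L := ln (INR m)) in *. set (kk := INR k) in *.
  set (x := / kk * L).
  assert (Hxk : kk * x = L) by (unfold x; field; lra).
  assert (Hx6 : 0.6 <= x) by (apply (Rmult_le_reg_l kk); [lra|]; rewrite Hxk; lra).
  pose proof (T1 x ltac:(lra)).
  assert (x * x >= 0.6 * x) by nra. assert (x*(x*x) >= 0.36 * x) by nra. simpl in H.
  assert (1.36 * x <= exp x - 1) by nra.
  apply divle; [lra|]. rewrite <- Hxk. assert (0 <= kk * (exp x - 1 - 1.36 * x)) by (apply Rmult_le_pos; lra). lra.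
Qed.

Lemma VJ_ge m k : 1 < INR m -> 1.36 * ln (INR m) <= (1 - / INR m) * INR k -> 1.36 <= V_J m k.
Proof.
  intros Hm H. unfold V_J.
  assert (HL : 0 < ln (INR m)) by (rewrite <- ln_1; apply ln_increasing; lra).
  apply divle; lra.
Qed.

Lemma INR_k k : (1 <= k)%nat -> 1 <= INR k.
Proof. intros; change 1 with (INR 1); apply le_INR; auto. Qed.

Theorem claim3p2 :
  V_max 3 2 = 2 * (sqrt 3 - 1) / ln 3 /\
  (forall m k : nat, (2 <= m)%nat -> (1 <= k)%nat ->
     2 * (sqrt 3 - 1) / ln 3 <= V_max m k).
Proof.
  assert (E3 : INR 3 = 3) by (simpl; ring).
  assert (E2 : INR 2 = 2) by (simpl; ring).
  assert (VH32 : V_H 3 2 = 2 * (sqrt 3 - 1) / ln 3).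
  { unfold V_H. rewrite E3, E2, Rpower_sqrt by lra. reflexivity. }
  split.
  { unfold V_max. rewrite Rmax_right; [exact VH32|]. rewrite VH32. unfold V_J.
    rewrite E3, E2. pose proof sqrt3_facts. pose proof ln3_lb.
    unfold Rdiv. apply Rmult_le_compat_r; [apply Rlt_le, Rinv_0_lt_compat; lra|]. 
    assert (/3 = 1/3) by field. nra. }
  intros m k Hm Hk.
  pose proof c_le as Hc. pose proof (INR_k k Hk) as Hk1.
  unfold V_max.
  assert (HJ : 1.36 <= V_J m k -> 2 * (sqrt 3 - 1) / ln 3 <= Rmax (V_J m k) (V_H m k))
    by (intro; eapply Rle_trans; [|apply Rmax_l]; lra).
  assert (HH : 1.36 <= V_H m k -> 2 * (sqrt 3 - 1) / ln 3 <= Rmax (V_J m k) (V_H m k))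
    by (intro; eapply Rle_trans; [|apply Rmax_r]; lra).
  assert (Hm2 : 2 <= INR m) by (rewrite <- E2; apply le_INR; auto).
  destruct (Rle_lt_dec (0.6 * INR k) (ln (INR m))) as [Hx|Hx].
  { apply HH, VH_ge; lra. }
  destruct m as [|[|[|[|[|[|m]]]]]]; try lia.
  - rewrite E2 in Hx. pose proof ln2_lb. pose proof ln2_ub.
    apply HJ, VJ_ge; rewrite E2; [lra|].
    assert (2 <= INR k). { destruct k as [|[|k]]; try lia. simpl in Hx; lra.
      change 2 with (INR 2); apply le_INR; lia. }
    assert (/2 = 1/2) by field. nra.
  - rewrite E3 in Hx. pose proof ln3_lb. pose proof ln3_ub.
    destruct k as [|[|[|k]]]; try lia.
    + simpl in Hx; lra.
    + rewrite VH32. apply Rmax_r.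
    + apply HJ, VJ_ge; rewrite E3; [lra|].
      assert (3 <= INR (S (S (S k)))) by (rewrite <- E3; apply le_INR; lia).
      assert (/3 = 1/3) by field. nra.
  - assert (E4 : INR 4 = 4) by (simpl; ring). rewrite E4 in Hx.
    pose proof ln4_lb. pose proof ln4_ub.
    destruct k as [|[|[|k]]]; try lia; try (simpl in Hx; lra).
    apply HJ, VJ_ge; rewrite E4; [lra|].
    assert (3 <= INR (S (S (S k)))) by (rewrite <- E3; apply le_INR; lia).
    assert (/4 = 1/4) by field. nra.
  - assert (E5 : INR 5 = 5) by (simpl; ring). rewrite E5 in Hx.
    pose proof ln5_lb. pose proof ln5_ub.
    destruct k as [|[|[|k]]]; try lia; try (simpl in Hx; lra).
    apply HJ, VJ_ge; rewrite E5; [lra|].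
    assert (3 <= INR (S (S (S k)))) by (rewrite <- E3; apply le_INR; lia).
    assert (/5 = 1/5) by field. nra.
  - set (M := S (S (S (S (S (S m)))))) in *.
    assert (6 <= INR M) by (replace 6 with (INR 6) by (simpl; ring); apply le_INR; unfold M; lia).
    assert (HL : 0 < ln (INR M)) by (rewrite <- ln_1; apply ln_increasing; lra).
    apply HJ, VJ_ge; [lra|].
    assert (/ INR M <= 1/6) by (unfold Rdiv; rewrite Rmult_1_l; apply Rinv_le_contravar; lra).
    nra.
Qed.
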